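(* Let $B>0$, $C>0$ and $\gamma\in[0,1]$ be fixed. For $\alpha\in[0,1/2]$ define $$b_{a}(\alpha)=\frac{\left(-2\alpha^4+5\alpha^3-4\alpha^2+\alpha\right)\gamma+4\alpha^4-9\alpha^3+4\alpha^2}{2\alpha^3-4\alpha^2+1},$$ $$b_{h}(\alpha)=\frac{\left(2\alpha^4-5\alpha^3+4\alpha^2-\alpha\right)\gamma-4\alpha^4+10\alpha^3-6\alpha^2-\alpha+1}{2\alpha^3-4\alpha^2+1},$$ and set $B_{\mathrm{attacker}}(\alpha)=B\,b_a(\alpha)$, $B_{\mathrm{honest}}(\alpha)=B\,b_h(\alpha)$. Let $f(\alpha)=\frac{\alpha\,B_{\mathrm{honest}}(\alpha)}{(1-\alpha)\left(B_{\mathrm{attacker}}(\alpha)+B_{\mathrm{honest}}(\alpha)\right)}$ for $\alpha\in[0,1/2]$, and let $M_{\max}=\frac{B}{C}\max_{\alpha\in[0,1/2]}f(\alpha)$. For $M>0$ and $H>0$ let $\alpha=\frac{M}{H+M}$ and define $$\mathcal{U}^S(H)=B\,\frac{B_{\mathrm{honest}}(\alpha)}{(1-\alpha)B}\cdot\frac{B}{\left(B_{\mathrm{attacker}}(\alpha)+B_{\mathrm{honest}}(\alpha)\right)(H+M)}-C.$$ Call $H^*$ an equilibrium if $H^*>M$ and $\mathcal{U}^S(H^* )=0$. Then for every $M$ with $0<M<M_{\max}$ there are exactly two equilibria $H^*_1<H^*_2$, where $H^*_2$ is stable and $H^*_1$ is unstable.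
   Context: Model of selfish mining (in the sense of Eyal and Sirer) with elastic hash supply: $B$ is the expected block reward, $C$ the cost per unit hash rate per block interval, $H$ the honest miners' total hash rate, $M$ the attacking pool's hash rate, $\gamma$ the fraction of honest miners mining on the attacker's block during a tie, and $\mathcal{U}^S(H)$ the honest miners' per-hash-rate profit under attack. Honest miners enter when profit is positive and leave when it is negative. An equilibrium $H^*$ is stable if there is $\varepsilon>0$ such that $\mathcal{U}^S(H)>0$ for $H\in(H^*-\varepsilon,H^* )$ and $\mathcal{U}^S(H)<0$ for $H\in(H^*,H^*+\varepsilon)$ (so perturbations are driven back to $H^*$); it is unstable if instead $\mathcal{U}^S(H)<0$ for $H\in(H^*-\varepsilon,H^* )$ and $\mathcal{U}^S(H)>0$ for $H\in(H^*,H^*+\varepsilon)$. *)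

(* Defs.v *)
From Stdlib Require Import Reals Lra.
Open Scope R_scope.

Definition b_a (g a : R) : R :=
  ((-2*a^4 + 5*a^3 - 4*a^2 + a) * g + 4*a^4 - 9*a^3 + 4*a^2)
  / (2*a^3 - 4*a^2 + 1).

Definition b_h (g a : R) : R :=
  ((2*a^4 - 5*a^3 + 4*a^2 - a) * g - 4*a^4 + 10*a^3 - 6*a^2 - a + 1)
  / (2*a^3 - 4*a^2 + 1).

Definition B_attacker (B g a : R) : R := B * b_a g a.
Definition B_honest (B g a : R) : R := B * b_h g a.

Definition f (B g a : R) : R :=
  a * B_honest B g a / ((1 - a) * (B_attacker B g a + B_honest B g a)).

Definition is_max_f (B g fmax : R) : Prop :=
  (exists a, 0 <= a <= 1/2 /\ f B g a = fmax) /\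
  (forall a, 0 <= a <= 1/2 -> f B g a <= fmax).

Definition US (B C g M H : R) : R :=
  let a := M / (H + M) in
  B * (B_honest B g a / ((1 - a) * B))
    * (B / ((B_attacker B g a + B_honest B g a) * (H + M))) - C.

Definition equilibrium (B C g M H : R) : Prop :=
  H > M /\ US B C g M H = 0.

Definition stable_eq (B C g M Hs : R) : Prop :=
  exists eps, eps > 0 /\
    (forall H, Hs - eps < H < Hs -> US B C g M H > 0) /\
    (forall H, Hs < H < Hs + eps -> US B C g M H < 0).

Definition unstable_eq (B C g M Hs : R) : Prop :=
  exists eps, eps > 0 /\
    (forall H, Hs - eps < H < Hs -> US B C g M H < 0) /\
    (forall H, Hs < H < Hs + eps -> US B C g M H > 0).

(* Main.v *)
From Stdlib Require Import Reals Lra Psatz.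
From Coquelicot Require Import Coquelicot.
Require Import Defs.
Open Scope R_scope.
Definition Nf g a := a*(1-2*a)*(1+(2-g)*a*(1-a)).
Definition Sf a := a^3-2*a^2-a+1.
Definition fr g a := Nf g a / Sf a.
Definition Qf g a := (1-4*a+4*a^2-2*a^3+2*a^4) + (2-g)*(2*a-10*a^2+14*a^3-a^4-8*a^5+2*a^6).
Definition dQf g a := (-4+8*a-6*a^2+8*a^3) + (2-g)*(2-20*a+42*a^2-4*a^3-40*a^4+12*a^5).
Lemma fr_der g x : Sf x <> 0 -> is_derive (fr g) x (Qf g x / (Sf x)^2).
Proof. intros H. unfold fr, Nf, Sf, Qf in *. auto_derive. exact H. field. exact H. Qed.
Lemma Q_der g x : is_derive (Qf g) x (dQf g x).
Proof. unfold Qf, dQf. auto_derive. trivial. ring. Qed.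
Lemma dQ_neg g a : 0 <= g <= 1 -> 0 < a <= 1/2 -> dQf g a < 0.
Proof. intros Hg Ha.
 assert (r1: 0 < 11/4 + 59/2*a - 13*a^2 - 34*a^3 + 12*a^4).
 { assert (a^2 <= a/2) by nra. assert (a^3 <= a/4) by nra. nra. }
 assert (r2: 0 < 61 - 34*a - 68*a^2 + 24*a^3).
 { assert (a^2 <= a/2) by nra. nra. }
 assert (h1: -2 -12*a +36*a^2 +4*a^3 -40*a^4 + 12*a^5 < 0).
 { replace (-2 -12*a +36*a^2 +4*a^3 -40*a^4 + 12*a^5) with
     ((a-1/2)*(11/4 + 59/2*a - 13*a^2 - 34*a^3 + 12*a^4) - 5/8) by field. nra. }
 assert (h2: -32 + 78*a - 80*a^3 + 24*a^4 < 0).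
 { replace (-32 + 78*a - 80*a^3 + 24*a^4) with
     ((a-1/2)*(61 - 34*a - 68*a^2 + 24*a^3) - 3/2) by field. nra. }
 unfold dQf.
 replace ((-4+8*a-6*a^2+8*a^3) + (2-g)*(2-20*a+42*a^2-4*a^3-40*a^4+12*a^5))
  with (g*(-2 -12*a +36*a^2 +4*a^3 -40*a^4 + 12*a^5) + (1-g)*(a*(-32 + 78*a - 80*a^3 + 24*a^4))) by ring.
 assert (h3: a*(-32 + 78*a - 80*a^3 + 24*a^4) < 0) by nra.
 set (P := -2 -12*a +36*a^2 +4*a^3 -40*a^4 + 12*a^5) in *.
 set (Q := a*(-32 + 78*a - 80*a^3 + 24*a^4)) in *. nra. Qed.

Lemma cont_of_der (h : R -> R) : (forall x, ex_derive h x) -> continuity h.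
Proof. intros H x. apply derivable_continuous_pt. apply ex_derive_Reals_0. apply H. Qed.

Lemma Q_dec g x y : 0 <= g <= 1 -> 0 <= x -> x < y -> y <= 1/2 -> Qf g y < Qf g x.
Proof. intros Hg Hx Hxy Hy.
 destruct (MVT_cor2 (Qf g) (dQf g) x y Hxy) as [c [Hc1 Hc2]].
 { intros c _. apply is_derive_Reals. apply Q_der. }
 assert (dQf g c < 0) by (apply dQ_neg; lra). nra. Qed.

Lemma Q_root g : 0 <= g <= 1 -> exists r, (0 < r < 1/2) /\ (forall a, 0 <= a < r -> Qf g a > 0) /\ (forall a, r < a <= 1/2 -> Qf g a < 0).
Proof. intros Hg.
 assert (H0 : Qf g 0 = 1) by (unfold Qf; ring).
 assert (H1 : Qf g (1/2) = -1/8 - (2-g)/32) by (unfold Qf; field).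
 destruct (IVT_cor (Qf g) 0 (1/2)) as [r [Hr1 Hr2]].
 { apply cont_of_der. intros x. unfold Qf. auto_derive. trivial. }
 { lra. }
 { rewrite H0, H1. lra. }
 exists r. assert (r <> 0) by (intro; subst; lra).
 assert (r <> 1/2) by (intro; subst; lra).
 split; [lra|split].
 - intros a Ha. rewrite <- Hr2. apply Q_dec; lra.
 - intros a Ha. rewrite <- Hr2. apply Q_dec; lra.
Qed.

Lemma S_pos a : 0 <= a <= 1/2 -> Sf a >= 1/8.
Proof. intros Ha. unfold Sf.
 assert (a^2 - 3/2*a - 7/4 < 0) by nra.
 assert ((a-1/2)*(a^2 - 3/2*a - 7/4) >= 0) by nra.
 nra. Qed.

Lemma D_pos a : 0 <= a <= 1/2 -> 2*a^3-4*a^2+1 >= 1/4.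
Proof. intros Ha. assert (2*a^2-3*a-3/2 < 0) by nra.
 assert ((a-1/2)*(2*a^2-3*a-3/2) >= 0) by nra. nra. Qed.

Lemma fr_mono g x y : 0 <= g <= 1 -> 0 <= x -> x < y -> y <= 1/2 ->
  exists c, x < c < y /\ fr g y - fr g x = Qf g c / (Sf c)^2 * (y - x).
Proof. intros Hg Hx Hxy Hy.
 destruct (MVT_cor2 (fr g) (fun c => Qf g c / (Sf c)^2) x y Hxy) as [c [Hc1 Hc2]].
 { intros c Hc. apply is_derive_Reals. apply fr_der.
   assert (Sf c >= 1/8) by (apply S_pos; lra). lra. }
 exists c. split; [lra|exact Hc1]. Qed.

Lemma fr_inc g r x y : 0 <= g <= 1 -> r < 1/2 ->
  (forall a, 0 <= a < r -> Qf g a > 0) ->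
  0 <= x -> x < y -> y <= r -> fr g x < fr g y.
Proof. intros Hg Hr HQ Hx Hxy Hy.
 destruct (fr_mono g x y) as [c [Hc Heq]]; try lra.
 assert (Sf c >= 1/8) by (apply S_pos; lra).
 assert (Qf g c > 0) by (apply HQ; lra).
 assert (Qf g c / (Sf c)^2 > 0).
 { apply Rdiv_lt_0_compat; [lra| apply pow_lt; lra]. }
 nra. Qed.

Lemma fr_dec g r x y : 0 <= g <= 1 -> 0 < r ->
  (forall a, r < a <= 1/2 -> Qf g a < 0) ->
  r <= x -> x < y -> y <= 1/2 -> fr g y < fr g x.
Proof. intros Hg Hr HQ Hx Hxy Hy.
 destruct (fr_mono g x y) as [c [Hc Heq]]; try lra.
 assert (Sf c >= 1/8) by (apply S_pos; lra).
 assert (Qf g c < 0) by (apply HQ; lra).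
 assert (Qf g c / (Sf c)^2 < 0).
 { unfold Rdiv. apply Rmult_neg_pos; [lra| apply Rinv_0_lt_compat, pow_lt; lra]. }
 nra. Qed.

Definition Nh g a := (1-2*a)*(1-a)*(1+(2-g)*a*(1-a)).

Lemma sum_eq B g a : 0 <= a <= 1/2 ->
  B_attacker B g a + B_honest B g a = B * Sf a / (2*a^3-4*a^2+1).
Proof. intros Ha. assert (2*a^3-4*a^2+1 >= 1/4) by (apply D_pos; lra).
 unfold B_attacker, B_honest, b_a, b_h, Sf. field. lra. Qed.

Lemma hon_eq B g a : 0 <= a <= 1/2 ->
  B_honest B g a = B * Nh g a / (2*a^3-4*a^2+1).
Proof. intros Ha. assert (2*a^3-4*a^2+1 >= 1/4) by (apply D_pos; lra).
 unfold B_honest, b_h, Nh. field. lra. Qed.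

Lemma f_eq B g a : 0 < B -> 0 <= a <= 1/2 -> f B g a = fr g a.
Proof. intros HB Ha.
 assert (2*a^3-4*a^2+1 >= 1/4) by (apply D_pos; lra).
 assert (Sf a >= 1/8) by (apply S_pos; lra).
 unfold f. rewrite sum_eq, hon_eq by lra. unfold fr, Nf, Nh.
 field. repeat split; lra. Qed.

Lemma US_eq B C g M H : 0 < B -> 0 < M -> M <= H ->
  US B C g M H = B / M * fr g (M/(H+M)) - C.
Proof. intros HB HM HH. unfold US. cbv zeta.
 set (a := M/(H+M)).
 assert (Ha : 0 < a <= 1/2).
 { unfold a. split. apply Rdiv_lt_0_compat; lra.
   apply Rmult_le_reg_r with (H+M). lra. unfold Rdiv. rewrite Rmult_assoc, Rinv_l by lra. lra. }
 assert (HHM : H + M = M / a) by (unfold a; field; lra).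
 assert (2*a^3-4*a^2+1 >= 1/4) by (apply D_pos; lra).
 assert (Sf a >= 1/8) by (apply S_pos; lra).
 rewrite sum_eq, hon_eq by lra. rewrite HHM. unfold fr, Nf, Nh.
 field. repeat split; lra. Qed.

Lemma a_anti M x y : 0 < M -> 0 < x -> x < y -> M/(y+M) < M/(x+M).
Proof. intros. apply Rmult_lt_compat_l; [lra|]. apply Rinv_lt_contravar; nra. Qed.

Lemma a_half M H : 0 < M -> M < H -> 0 < M/(H+M) < 1/2.
Proof. intros. split. apply Rdiv_lt_0_compat; lra.
 apply Rmult_lt_reg_r with (H+M). lra. unfold Rdiv. rewrite Rmult_assoc, Rinv_l by lra. lra. Qed.

Lemma a_inv M a : 0 < M -> 0 < a -> M / ((M/a - M) + M) = a.
Proof. intros. field. lra. Qed.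

Theorem proposition1 :
  forall (B C g : R), 0 < B -> 0 < C -> 0 <= g <= 1 ->
  forall fmax : R, is_max_f B g fmax ->
  forall M : R, 0 < M -> M < (B / C) * fmax ->
  exists H1 H2 : R,
    H1 < H2 /\
    equilibrium B C g M H1 /\ equilibrium B C g M H2 /\
    (forall H, equilibrium B C g M H -> H = H1 \/ H = H2) /\
    stable_eq B C g M H2 /\ unstable_eq B C g M H1.
Proof.
 intros B C g HB HC Hg fmax [[a0 [Ha0 Hfa0]] _] M HM HMmax.
 destruct (Q_root g Hg) as [r [Hr [HQp HQn]]].
 set (c := C * M / B).
 assert (Hc0 : 0 < c) by (unfold c; apply Rdiv_lt_0_compat; nra).
 assert (Hcf : c < fmax).
 { unfold c. apply Rmult_lt_reg_r with (B / C * / B). 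
   apply Rmult_lt_0_compat; [apply Rdiv_lt_0_compat; lra| apply Rinv_0_lt_compat; lra].
   replace (C * M / B * (B / C * / B)) with (M / B) by (field; lra).
   replace (fmax * (B / C * / B)) with (B / C * fmax / B) by (field; lra).
   unfold Rdiv. apply Rmult_lt_compat_r. apply Rinv_0_lt_compat; lra. exact HMmax. }
 rewrite f_eq in Hfa0 by lra.
 assert (Hfr_r : fmax <= fr g r).
 { rewrite <- Hfa0. destruct (Rtotal_order a0 r) as [h|[h|h]].
   - left. apply (fr_inc g r); try exact HQp; lra.
   - subst; lra.
   - left. apply (fr_dec g r); try exact HQn; lra. }
 assert (Hfr0 : fr g 0 = 0) by (unfold fr, Nf, Sf; field; lra).
 assert (Hfr12 : fr g (1/2) = 0) by (unfold fr, Nf, Sf; field; lra).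
 assert (Pcont : continuity (fun a => Nf g a - c * Sf a)).
 { apply cont_of_der. intros x. unfold Nf, Sf. auto_derive. trivial. }
 assert (Psign : forall a, 0 <= a <= 1/2 -> Nf g a - c * Sf a = Sf a * (fr g a - c)).
 { intros a Ha. assert (Sf a >= 1/8) by (apply S_pos; lra). unfold fr. field. lra. }
 destruct (IVT_cor _ 0 r Pcont) as [a1 [Ha1 Ha1e]]; [lra| |].
 { cbv beta. rewrite !Psign by lra. rewrite Hfr0.
   assert (Sf 0 >= 1/8) by (apply S_pos; lra). assert (Sf r >= 1/8) by (apply S_pos; lra).
   assert (0 < fr g r - c) by lra.
   assert (Sf 0 * (0 - c) < 0) by nra. assert (0 < Sf r * (fr g r - c)) by nra. nra. }
 destruct (IVT_cor _ r (1/2) Pcont) as [a2 [Ha2 Ha2e]]; [lra| |].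
 { cbv beta. rewrite !Psign by lra. rewrite Hfr12.
   assert (Sf (1/2) >= 1/8) by (apply S_pos; lra). assert (Sf r >= 1/8) by (apply S_pos; lra).
   assert (0 < fr g r - c) by lra.
   assert (Sf (1/2) * (0 - c) < 0) by nra. assert (0 < Sf r * (fr g r - c)) by nra. nra. }
 cbv beta in Ha1e, Ha2e. rewrite Psign in Ha1e, Ha2e by lra.
 assert (Hfa1 : fr g a1 = c).
 { assert (Sf a1 >= 1/8) by (apply S_pos; lra). apply Rmult_integral in Ha1e. lra. }
 assert (Hfa2 : fr g a2 = c).
 { assert (Sf a2 >= 1/8) by (apply S_pos; lra). apply Rmult_integral in Ha2e. lra. }
 assert (Hn1 : a1 <> 0) by (intro; subst; lra).
 assert (Hn2 : a1 <> r) by (intro; subst; lra).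
 assert (Hn3 : a2 <> 1/2) by (intro; subst; lra).
 assert (Hn4 : a2 <> r) by (intro; subst; lra).
 assert (Sgt : forall a, a1 < a < a2 -> fr g a > c).
 { intros a Ha. destruct (Rle_lt_dec a r).
   - rewrite <- Hfa1. apply (fr_inc g r); try exact HQp; lra.
   - rewrite <- Hfa2. apply (fr_dec g r); try exact HQn; lra. }
 assert (Slt1 : forall a, 0 <= a < a1 -> fr g a < c).
 { intros a Ha. rewrite <- Hfa1. apply (fr_inc g r); try exact HQp; lra. }
 assert (Slt2 : forall a, a2 < a <= 1/2 -> fr g a < c).
 { intros a Ha. rewrite <- Hfa2. apply (fr_dec g r); try exact HQn; lra. }
 assert (USf : forall H, M <= H -> US B C g M H = B / M * (fr g (M/(H+M)) - c)).
 { intros H HH. rewrite US_eq by lra. unfold c. field. lra. }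
 assert (BM : 0 < B / M) by (apply Rdiv_lt_0_compat; lra).
 set (H1 := M / a2 - M). set (H2 := M / a1 - M).
 assert (Ea1 : M / (H2 + M) = a1) by (apply a_inv; lra).
 assert (Ea2 : M / (H1 + M) = a2) by (apply a_inv; lra).
 assert (HH1 : M < H1).
 { unfold H1. apply Rplus_lt_reg_r with M. replace (M / a2 - M + M) with (M / a2) by ring.
   apply Rmult_lt_reg_r with a2. lra. unfold Rdiv. rewrite Rmult_assoc, Rinv_l by lra. nra. }
 assert (H12 : H1 < H2).
 { unfold H1, H2. apply Rplus_lt_compat_r. apply Rmult_lt_compat_l. lra.
   apply Rinv_lt_contravar; nra. }
 exists H1, H2. split; [exact H12|].
 split; [split; [lra| rewrite USf, Ea2, Hfa2 by lra; ring]|].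
 split; [split; [lra| rewrite USf, Ea1, Hfa1 by lra; ring]|].
 split; [|split].
 - intros H [HH HUS]. rewrite USf in HUS by lra.
   assert (Hfa : fr g (M/(H+M)) = c).
   { apply Rmult_integral in HUS. lra. }
   pose proof (a_half M H HM HH) as Ha.
   assert (HHa : H = M / (M/(H+M)) - M) by (field; lra).
   set (a := M/(H+M)) in *.
   destruct (Rtotal_order a a1) as [h|[h|h]].
   + specialize (Slt1 a). lra.
   + right. rewrite HHa, h. reflexivity.
   + destruct (Rtotal_order a a2) as [h'|[h'|h']].
     * specialize (Sgt a). lra.
     * left. rewrite HHa, h'. reflexivity.
     * specialize (Slt2 a). lra.
 - exists (H2 - H1). split; [lra|split].
   + intros H Hh. rewrite USf by lra.
     assert (M/(H2+M) < M/(H+M)) by (apply a_anti; lra).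
     assert (M/(H+M) < M/(H1+M)) by (apply a_anti; lra).
     specialize (Sgt (M/(H+M))). apply Rmult_lt_0_compat; lra.
   + intros H Hh. rewrite USf by lra.
     assert (M/(H+M) < M/(H2+M)) by (apply a_anti; lra).
     pose proof (a_half M H HM ltac:(lra)).
     specialize (Slt1 (M/(H+M))). 
     assert (fr g (M/(H+M)) - c < 0) by lra. nra.
 - exists (Rmin (H1 - M) (H2 - H1)). split; [apply Rmin_pos; lra|split].
   + intros H Hh. assert (HmH : H1 - M >= Rmin (H1 - M) (H2 - H1)) by (apply Rle_ge, Rmin_l).
     rewrite USf by lra.
     assert (M/(H1+M) < M/(H+M)) by (apply a_anti; lra).
     pose proof (a_half M H HM ltac:(lra)).
     specialize (Slt2 (M/(H+M))).
     assert (fr g (M/(H+M)) - c < 0) by lra. nra.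
   + intros H Hh. assert (HmH : H2 - H1 >= Rmin (H1 - M) (H2 - H1)) by (apply Rle_ge, Rmin_r).
     rewrite USf by lra.
     assert (M/(H2+M) < M/(H+M)) by (apply a_anti; lra).
     assert (M/(H+M) < M/(H1+M)) by (apply a_anti; lra).
     specialize (Sgt (M/(H+M))). apply Rmult_lt_0_compat; lra.
Qed.
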